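(* Let $G$ and $G'$ be bipartite graphs with the same left set. Assume $G$ has $\varepsilon$-rich matching up to $K$ with load $\ell$, and $G'$ has $\varepsilon'$-rich matching up to $\ell$ with load $1$. Then the product $G \times G'$ has $(\varepsilon+\varepsilon')$-rich matching up to $K$ with load $1$. Moreover, if the matchings in $G$ and $G'$ are with $T$-expiration, then so is the matching in the product.
   Context: Graphs are bipartite with left set $L$ and right set $R$, every left node having exactly $D$ neighbors (left degree $D$). The product of two graphs with the same left set $L$ and right sets $R_1,R_2$ is the graph with left set $L$, right set $R_1\times R_2$, in which $x$ is adjacent to $(y_1,y_2)$ iff $x$ is adjacent to $y_1$ in the first graph and to $y_2$ in the second. $\varepsilon$-rich matching game with parameter $K$ and load $\ell$ on a graph of left degree $D$: Requester and Matcher alternate turns (Requester starts) and maintain a collection $M$ of assignments, initially empty. Requester retracts zero or more assignments so that at most $K-1$ remain, and selects a left node $x$. Matcher adds an assignment for $x$: a set of at least $(1-\varepsilon)D$ edges incident to $x$; afterwards every right node must be incident to at most $\ell$ edges among all assignments in $M$, otherwise Matcher loses. In the variant with $T$-expiration, Requester must retract the assignment added in round $i$ during one of the rounds $i+1,\dots,i+T$. The graph has $\varepsilon$-rich matching up to $K$ with load $\ell$ (with $T$-expiration) if Matcher has a strategy with which she never loses. *)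

(* Defs.v *)
From HB Require Import structures.
From mathcomp Require Import all_boot all_order all_algebra.
Set Implicit Arguments. Unset Strict Implicit. Unset Printing Implicit Defensive.
Import Order.TTheory GRing.Theory Num.Theory.

(* A bipartite graph with left set L and right set R is given by its
   adjacency relation E : L -> R -> bool (x adjacent to y iff E x y). *)

Definition left_degree (L R : finType) (E : L -> R -> bool) (D : nat) : Prop :=
  forall x : L, #|[set y | E x y]| = D.

Definition prod_graph (L R1 R2 : finType) (E1 : L -> R1 -> bool)
  (E2 : L -> R2 -> bool) : L -> (R1 * R2)%type -> bool :=
  fun x y => E1 x y.1 && E2 x y.2.

(* A Requester move in round n (rounds numbered 0,1,2,...):
   (keep, x) where keep is the list of (indices of the rounds of) the
   assignments that remain after the retraction, and x the selected left
   node.  The assignment added in round i is identified with i. *)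
Definition rmove (L : Type) := (seq nat * L)%type.

(* rounds whose assignments are in M just before Matcher's move of round n
   (after her move the added round n is in M as well) *)
Definition alive_after (L : Type) (r : nat -> rmove L) (n : nat) : seq nat :=
  n :: (r n).1.

Definition alive_before (L : Type) (r : nat -> rmove L) (n : nat) : seq nat :=
  if n is m.+1 then alive_after r m else [::].

(* Legal Requester play for parameter K, with T-expiration when
   T = Some t, without expiration when T = None. *)
Definition legal_requester (L : Type) (K : nat) (T : option nat)
  (r : nat -> rmove L) : Prop :=
  forall n,
    [/\ uniq (r n).1,
        {subset (r n).1 <= alive_before r n},
        size (r n).1 <= K.-1
      & (if T is Some t then forall i, i \in (r n).1 -> n < i + t else True)].

(* Matcher strategy: given the history of Requester moves of rounds
   0..n (the current one last), the set of right nodes y such that the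
   edges (x_n, y) form the assignment added in round n. *)
Definition mstrategy (L R : finType) := seq (rmove L) -> {set R}.

Definition massign (L R : finType) (sigma : mstrategy L R)
  (r : nat -> rmove L) (n : nat) : {set R} :=
  sigma [seq r i | i <- iota 0 n.+1].

Definition rich_matching (F : realFieldType) (L R : finType)
  (E : L -> R -> bool) (D : nat) (eps : F) (K l : nat) (T : option nat) : Prop :=
  exists sigma : mstrategy L R,
    forall r : nat -> rmove L, legal_requester K T r ->
    forall n : nat,
      [/\ massign sigma r n \subset [set y | E (r n).2 y],
          ((1 - eps) * D%:R <= (#|massign sigma r n|)%:R)%R
        & forall y : R,
            count (fun i => y \in massign sigma r i) (alive_after r n) <= l].

(* Main.v *)
Require Import Defs.
From HB Require Import structures.
From mathcomp Require Import all_boot all_order all_algebra.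
From mathcomp Require Import zify.

Section Aux.
Local Set Implicit Arguments. Local Unset Strict Implicit.

Definition inA (L R1 : finType) (s1 : mstrategy L R1) (y1 : R1)
  (r : nat -> rmove L) (i : nat) : bool := y1 \in massign s1 r i.

Definition Sq (L R1 : finType) (s1 : mstrategy L R1) (y1 : R1)
  (r : nat -> rmove L) (N : nat) : seq nat :=
  [seq i <- iota 0 N | inA s1 y1 r i].

Definition sidx (L R1 : finType) (s1 : mstrategy L R1) (y1 : R1)
  (r : nat -> rmove L) (j : nat) : nat := count (inA s1 y1 r) (iota 0 j).

Definition submove (L R1 : finType) (s1 : mstrategy L R1) (y1 : R1)
  (r : nat -> rmove L) (i : nat) : rmove L :=
  ([seq sidx s1 y1 r j | j <- (r i).1 & (j < i) && inA s1 y1 r j], (r i).2).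

Definition subhist (L R1 : finType) (s1 : mstrategy L R1) (y1 : R1)
  (r : nat -> rmove L) (n : nat) : seq (rmove L) :=
  map (submove s1 y1 r) (Sq s1 y1 r n.+1).

Definition A2 (L R1 R2 : finType) (s1 : mstrategy L R1) (s2 : mstrategy L R2)
  (y1 : R1) (r : nat -> rmove L) (n : nat) : {set R2} :=
  s2 (subhist s1 y1 r n).

Definition Prod (L R1 R2 : finType) (s1 : mstrategy L R1) (s2 : mstrategy L R2)
  (r : nat -> rmove L) (n : nat) : {set R1 * R2} :=
  [set p | (p.1 \in massign s1 r n) && (p.2 \in A2 s1 s2 p.1 r n)].

Definition psigma (L R1 R2 : finType) (s1 : mstrategy L R1) (s2 : mstrategy L R2)
  : mstrategy L (R1 * R2)%type :=
  fun h => if h is m :: _ then Prod s1 s2 (fun i => nth m h i) (size h).-1 else set0.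

Definition subreq (L R1 : finType) (s1 : mstrategy L R1) (y1 : R1)
  (r : nat -> rmove L) (n : nat) : nat -> rmove L :=
  fun k => nth ([::], (r 0).2) (subhist s1 y1 r n) k.

Variables (L R1 R2 : finType) (s1 : mstrategy L R1) (s2 : mstrategy L R2).
Variables (y1 : R1) (r : nat -> rmove L).

Local Notation iA := (inA s1 y1 r).
Local Notation sx := (sidx s1 y1 r).
Local Notation SQ := (Sq s1 y1 r).

Lemma sidxS j : sx j.+1 = sx j + iA j.
Proof. by rewrite /sidx -addn1 iotaD count_cat /= addn0. Qed.

Lemma sidx_mono j i : j <= i -> sx j <= sx i.
Proof.
move=> ji; rewrite /sidx -(subnKC ji) iotaD count_cat; exact: leq_addr.
Qed.

Lemma sidx_lt j i : iA j -> j < i -> sx j < sx i.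
Proof.
move=> Aj ji; have H := sidx_mono ji; apply: leq_trans H; by rewrite sidxS Aj addn1.
Qed.

Lemma sidx_inj j i : iA j -> iA i -> sx j = sx i -> j = i.
Proof.
move=> Aj Ai E; case: (ltngtP j i) => // H.
- by move: (sidx_lt Aj H); rewrite E ltnn.
- by move: (sidx_lt Ai H); rewrite E ltnn.
Qed.

Lemma sidx_ltP j i : iA j -> iA i -> (sx j < sx i) = (j < i).
Proof.
move=> Aj Ai; apply/idP/idP; last exact: sidx_lt.
move=> H; rewrite ltnNge; apply/negP=> ij; move: (sidx_mono ij); by rewrite leqNgt H.
Qed.

Lemma sidx_diff j i : j <= i -> sx i <= sx j + (i - j).
Proof.
move=> ji; rewrite /sidx -(subnKC ji) iotaD count_cat addKn leq_add2l.
apply: leq_trans (count_size _ _) _; by rewrite size_iota.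
Qed.

Lemma size_Sq N : size (SQ N) = sx N.
Proof. by rewrite size_filter. Qed.

Lemma Sq_cat m N : m <= N -> SQ N = SQ m ++ [seq i <- iota m (N - m) | iA i].
Proof. by move=> mN; rewrite /Sq -{1}(subnKC mN) iotaD filter_cat. Qed.

Lemma take_Sq m N : m <= N -> take (sx m) (SQ N) = SQ m.
Proof. by move=> mN; rewrite (Sq_cat mN) -size_Sq take_size_cat. Qed.

Lemma nth_Sq i N : iA i -> i < N -> nth 0 (SQ N) (sx i) = i.
Proof.
move=> Ai iN; rewrite (Sq_cat (ltnW iN)) nth_cat size_Sq ltnn subnn.
have -> : N - i = (N - i.+1).+1 by lia.
by rewrite /= Ai.
Qed.

Lemma mem_Sq i N : (i \in SQ N) = iA i && (i < N).
Proof. by rewrite mem_filter mem_iota add0n andbC. Qed.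

Lemma nth_Sq_inv k N : k < sx N ->
  [/\ iA (nth 0 (SQ N) k), nth 0 (SQ N) k < N & sx (nth 0 (SQ N) k) = k].
Proof.
move=> kN.
have : nth 0 (SQ N) k \in SQ N by apply: mem_nth; rewrite size_Sq.
rewrite mem_Sq => /andP[Ai iN]; split => //.
apply/eqP; rewrite -(@nth_uniq _ 0 (SQ N)).
- by rewrite nth_Sq.
- by rewrite size_Sq; apply: sidx_lt.
- by rewrite size_Sq.
- exact: (filter_uniq _ (iota_uniq 0 N)).
Qed.

End Aux.

Section Chain.
Local Set Implicit Arguments. Local Unset Strict Implicit.

Lemma keep_lt (L : finType) K T (r : nat -> rmove L) :
  legal_requester K T r -> forall i j, j \in (r i).1 -> j < i.
Proof.
move=> H; elim=> [|i IH] j; first by case: (H 0) => _ sub _ _ /sub.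
case: (H i.+1) => _ sub _ _ /sub /=.
by rewrite inE => /orP[/eqP -> // | /IH /ltnW].
Qed.

Lemma keep_down (L : finType) K T (r : nat -> rmove L) m d j :
  legal_requester K T r -> j \in (r (m + d)).1 -> j < m -> j \in (r m).1.
Proof.
move=> H; elim: d => [|d IH]; first by rewrite addn0.
rewrite addnS; case: (H (m + d).+1) => _ sub _ _ /sub /=.
rewrite inE => /orP[/eqP -> | /IH //]; lia.
Qed.

Lemma map_nth_iota0 (T : Type) (d : T) s k : k <= size s ->
  map (nth d s) (iota 0 k) = take k s.
Proof.
move=> ks; rewrite -{1}(mkseq_nth d (take k s)) /mkseq size_takel //.
apply/eq_in_map => j; rewrite mem_iota => /andP[_ jk]; by rewrite nth_take.
Qed.

Lemma Prod_congr (L R1 R2 : finType) (s1 : mstrategy L R1) (s2 : mstrategy L R2)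
  (r1 r2 : nat -> rmove L) n :
  (forall i, i <= n -> r1 i = r2 i) -> Prod s1 s2 r1 n = Prod s1 s2 r2 n.
Proof.
move=> H.
have hm i : i <= n -> massign s1 r1 i = massign s1 r2 i.
  move=> ni; rewrite /massign; congr s1; apply/eq_in_map => k.
  rewrite mem_iota => /andP[_ kn]; apply: H; lia.
have hA y i : i <= n -> inA s1 y r1 i = inA s1 y r2 i by move=> ni; rewrite /inA hm.
have hs y j : j <= n.+1 -> sidx s1 y r1 j = sidx s1 y r2 j.
  move=> jn; rewrite /sidx; apply: eq_in_count => k.
  rewrite mem_iota => /andP[_ kn]; apply: hA; lia.
have hsub y i : i <= n -> submove s1 y r1 i = submove s1 y r2 i.
  move=> ni; rewrite /submove H //; congr pair.
  have -> : [seq j <- (r2 i).1 | (j < i) && inA s1 y r1 j] =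
            [seq j <- (r2 i).1 | (j < i) && inA s1 y r2 j].
    apply: eq_filter => j; case: (ltnP j i) => ji //=; apply: hA; lia.
  apply/eq_in_map => j; rewrite mem_filter => /andP[/andP[ji _] _]; apply: hs; lia.
have hh y : subhist s1 y r1 n = subhist s1 y r2 n.
  rewrite /subhist /Sq (@eq_in_filter _ _ (inA s1 y r2)); last first.
    by move=> k; rewrite mem_iota => /andP[_ kn]; apply: hA.
  apply/eq_in_map => k; rewrite mem_filter mem_iota => /andP[_ /andP[_ kn]].
  by apply: hsub.
by apply/setP => p; rewrite !inE /A2 hm // hh.
Qed.

Lemma massign_psigma (L R1 R2 : finType) (s1 : mstrategy L R1) (s2 : mstrategy L R2)
  (r : nat -> rmove L) n : massign (psigma s1 s2) r n = Prod s1 s2 r n.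
Proof.
rewrite /massign /psigma /= size_map size_iota.
apply: Prod_congr => i ni.
have -> : r 0 :: map r (iota 1 n) = map r (iota 0 n.+1) by [].
by rewrite (nth_map 0) ?size_iota // nth_iota.
Qed.

End Chain.

Section Sub.
Local Set Implicit Arguments. Local Unset Strict Implicit.
Variables (L R1 R2 : finType) (s1 : mstrategy L R1) (s2 : mstrategy L R2).
Variables (y1 : R1) (r : nat -> rmove L) (n K l : nat) (T : option nat).
Hypothesis Hleg : legal_requester K T r.
Hypothesis Hload : forall i, count (fun j => y1 \in massign s1 r j) (alive_after r i) <= l.

Local Notation iA := (inA s1 y1 r).
Local Notation sx := (sidx s1 y1 r).
Local Notation SQ := (Sq s1 y1 r).
Local Notation r' := (subreq s1 y1 r n).
Local Notation sm := (submove s1 y1 r).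

Lemma subreq_at i : i <= n -> iA i -> r' (sx i) = sm i.
Proof.
move=> ni Ai; rewrite /subreq /subhist (nth_map 0) ?nth_Sq // size_Sq.
exact: sidx_lt.
Qed.

Lemma subreq_out k : sx n.+1 <= k -> r' k = ([::], (r 0).2).
Proof. by move=> kn; rewrite /subreq nth_default // size_map size_Sq. Qed.

Lemma subreq_massign i : i <= n -> iA i -> massign s2 r' (sx i) = A2 s1 s2 y1 r i.
Proof.
move=> ni Ai; rewrite /massign /A2; congr s2.
have e : (sx i).+1 = sx i.+1 by rewrite sidxS Ai addn1.
rewrite /subreq /subhist map_nth_iota0; last first.
  by rewrite size_map size_Sq e; apply: sidx_mono.
by rewrite -map_take e take_Sq.
Qed.

Lemma key i j : i <= n -> j \in (r i).1 -> iA j -> sx j \in alive_before r' (sx i).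
Proof.
move=> ni ji Aj; have jlt := keep_lt Hleg ji.
have := sidx_lt Aj jlt; case E: (sx i) => [|k0] // H.
have k0lt : k0 < sx n.+1.
  have := sidx_mono s1 y1 r (leqW ni); rewrite E; lia.
case: (nth_Sq_inv k0lt); set i0 := nth 0 _ k0 => Ai0 i0lt si0.
rewrite /alive_before /alive_after inE -{2}si0 subreq_at //.
case: (ltngtP (sx j) k0) => [lt|gt|eq] /=; [|lia|done].
have ji0 : j < i0 by rewrite -(sidx_ltP Aj Ai0) si0.
have i0i : i0 < i.
  rewrite ltnNge; apply/negP => /(sidx_mono s1 y1 r); by rewrite E si0 ltnn.
have jr0 : j \in (r i0).1.
  apply: (keep_down (d := i - i0) Hleg) => //; by rewrite subnKC // ltnW.
by apply: map_f; rewrite mem_filter jr0 Aj ji0.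
Qed.

Lemma sub_legal : legal_requester l T r'.
Proof.
move=> k; case: (ltnP k (sx n.+1)) => kn; last first.
  by rewrite subreq_out //; split => //; case: T.
case: (nth_Sq_inv kn); set i := nth 0 _ k => Ai ilt si.
rewrite -si subreq_at //.
case: (Hleg i) => uq _ _ hexp.
split.
- rewrite /submove /= map_inj_in_uniq ?filter_uniq //.
  move=> a b; rewrite !mem_filter => /andP[/andP[_ Aa] _] /andP[/andP[_ Ab] _].
  exact: sidx_inj.
- move=> k'; rewrite /submove /= => /mapP[j]; rewrite mem_filter.
  move=> /andP[/andP[_ Aj] jr] ->; exact: key.
- rewrite /submove /= size_map size_filter.
  have := Hload i; rewrite /alive_after /=.
  have : count (fun j => (j < i) && iA j) (r i).1 <= count iA (r i).1.
    by apply: sub_count => j /andP[].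
  rewrite /inA in Ai *; rewrite Ai /=; lia.
- move: hexp; case: T => // t hexp k'.
  rewrite /submove /= => /mapP[j]; rewrite mem_filter.
  move=> /andP[/andP[jlt Aj] jr] ->.
  have := hexp j jr; have := sidx_diff s1 y1 r (ltnW jlt); lia.
Qed.

End Sub.

From mathcomp Require Import ring lra.
Import Order.TTheory GRing.Theory Num.Theory.

Lemma eps_ge0 (F : realFieldType) (L R : finType) (E : L -> R -> bool) (D : nat)
  (eps : F) (K l : nat) (T : option nat) (x : L) :
  left_degree E D -> rich_matching E D eps K l T -> (0 < D)%N -> (0 <= eps)%R.
Proof.
move=> deg [s H] D0.
have leg : legal_requester K T (fun _ => ([::], x)) by clear H; move=> k; split => //; case: T.
case: (H _ leg 0) => sub le _.
have : (#|massign s (fun _ => ([::], x)) 0| <= D)%N.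
  by rewrite -(deg x); apply: subset_leq_card.
rewrite -(ler_nat F) => h.
have Dp : (0 < D%:R :> F)%R by rewrite ltr0n.
nra.
Qed.

Lemma card_dep (R1 R2 : finType) (A : {set R1}) (B : R1 -> {set R2}) :
  #|[set p : R1 * R2 | (p.1 \in A) && (p.2 \in B p.1)]| = \sum_(y in A) #|B y|.
Proof.
rewrite -sum1_card.
under [in RHS]eq_bigr => y _ do rewrite -sum1_card.
rewrite pair_big_dep /=; apply: eq_bigl => p; by rewrite inE.
Qed.

Lemma count_sub (T : eqType) (Q : pred T) (s t : seq T) :
  uniq s -> {subset s <= t} -> count Q s <= count Q t.
Proof.
move=> us st; rewrite -!size_filter; apply: uniq_leq_size; first exact: filter_uniq.
by move=> z; rewrite !mem_filter => /andP[-> /st].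
Qed.

Theorem lemma3 (F : realFieldType) (L R1 R2 : finType)
  (E1 : L -> R1 -> bool) (E2 : L -> R2 -> bool) (D1 D2 : nat)
  (eps eps' : F) (K l : nat) (T : option nat) :
  left_degree E1 D1 -> left_degree E2 D2 ->
  rich_matching E1 D1 eps K l T ->
  rich_matching E2 D2 eps' l 1 T ->
  rich_matching (prod_graph E1 E2) (D1 * D2) (eps + eps')%R K 1 T.
Proof.
move=> deg1 deg2 H1' H2'.
have [s1 H1] := H1'; have [s2 H2] := H2'.
exists (psigma s1 s2) => r Hleg n.
rewrite massign_psigma.
case: (H1 r Hleg n) => sub1 size1 _.
have Hload y1 i : count (fun j => y1 \in massign s1 r j) (alive_after r i) <= l.
  by case: (H1 r Hleg i).
have G2 y1 k := H2 _ (sub_legal n Hleg (Hload y1)) k.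
split.
- apply/subsetP => p; rewrite !inE => /andP[p1 p2]; rewrite /prod_graph.
  have := subsetP sub1 _ p1; rewrite inE => -> /=.
  have A1 : inA s1 p.1 r n := p1.
  rewrite -(subreq_massign s2 (leqnn n) A1) in p2.
  case: (G2 p.1 (sidx s1 p.1 r n)) => sub2 _ _.
  by have := subsetP sub2 _ p2; rewrite inE subreq_at.
- rewrite /Prod (card_dep _ _ (massign s1 r n) (fun y => A2 s1 s2 y r n)) natr_sum.
  set A := massign s1 r n in sub1 size1 *.
  have hb y1 : y1 \in A -> ((1 - eps') * D2%:R <= #|A2 s1 s2 y1 r n|%:R)%R.
    move=> Ay; have A1 : inA s1 y1 r n := Ay.
    rewrite -(subreq_massign s2 (leqnn n) A1).
    by case: (G2 y1 (sidx s1 y1 r n)).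
  have S1 := ler_sum (index_enum R1) hb; rewrite sumr_const -mulr_natr in S1.
  set S := (\sum_(i in A) _)%R in S1 *.
  have S0 : (0 <= S)%R by apply: sumr_ge0 => i _; apply: ler0n.
  have aD : (#|A| <= D1)%N by rewrite -((deg1 (r n).2)); apply: subset_leq_card.
  move: aD; rewrite -(ler_nat F) => aD.
  rewrite natrM.
  case: (posnP D1) => [->|D1p]; first by rewrite ?mul0r ?mulr0.
  case: (posnP D2) => [->|D2p]; first by rewrite ?mul0r ?mulr0.
  have e0 := @eps_ge0 _ _ _ _ _ _ _ _ _ (r n).2 deg1 H1' D1p.
  have e0' := @eps_ge0 _ _ _ _ _ _ _ _ _ (r n).2 deg2 H2' D2p.
  have d1 : (0 < D1%:R :> F)%R by rewrite ltr0n.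
  have d2 : (0 < D2%:R :> F)%R by rewrite ltr0n.
  set a := ((#|A|)%:R : F)%R in aD S1 size1 *.
  set x1 := (D1%:R : F)%R in aD size1 d1 *.
  set x2 := (D2%:R : F)%R in S1 d2 *.
  case: (lerP 0 (1 - eps')) => he.
  + have h1 : (0 <= (a - (1 - eps) * x1) * ((1 - eps') * x2))%R.
      apply: mulr_ge0; first by rewrite subr_ge0.
      by apply: mulr_ge0 => //; apply: ltW.
    have h2 : (0 <= eps * eps' * (x1 * x2))%R.
      by apply: mulr_ge0; [apply: mulr_ge0|apply: mulr_ge0; apply: ltW].
    nra.
  + have h3 : (0 <= x1 * x2)%R by apply: mulr_ge0; apply: ltW.
    nra.
- case=> y1 y2.
  rewrite (@eq_count _ _ (fun i => (y1, y2) \in Prod s1 s2 r i)); last first.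
    by move=> i; rewrite /= massign_psigma.
  set r' := subreq s1 y1 r n.
  set Q := fun k => y2 \in massign s2 r' k.
  have keepn : forall j, j \in (r n).1 -> j < n by move=> j; apply: (keep_lt Hleg).
  rewrite (@eq_in_count _ _ (fun i => inA s1 y1 r i && Q (sidx s1 y1 r i))); last first.
    move=> i; rewrite /alive_after inE => hi.
    have ni : i <= n by case/orP: hi => [/eqP -> // | /keepn /ltnW].
    rewrite inE /=; case Ai: (inA s1 y1 r i); last by rewrite /inA in Ai; rewrite Ai.
    rewrite /inA in Ai; rewrite Ai /= /Q /r'.
    by rewrite subreq_massign.
  have -> : count (fun i => inA s1 y1 r i && Q (sidx s1 y1 r i)) (alive_after r n) =
            count Q (map (sidx s1 y1 r) (filter (inA s1 y1 r) (alive_after r n))).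
    by rewrite count_map count_filter; apply: eq_count => i /=; rewrite andbC.
  have us : uniq (map (sidx s1 y1 r) (filter (inA s1 y1 r) (alive_after r n))).
    rewrite map_inj_in_uniq; last first.
      move=> a b; rewrite !mem_filter => /andP[Aa _] /andP[Ab _]; exact: sidx_inj.
    apply: filter_uniq; rewrite /alive_after /=.
    case: (Hleg n) => -> _ _ _; rewrite andbT.
    by apply/negP => /keepn; rewrite ltnn.
  set s' := map _ _ in us *.
  case An: (inA s1 y1 r n).
  + have sub : {subset s' <= alive_after r' (sidx s1 y1 r n)}.
      move=> z /mapP[j]; rewrite mem_filter => /andP[Aj]; rewrite /alive_after inE.
      case/orP => [/eqP -> -> | jn ->]; first by rewrite inE eqxx.
      rewrite inE /r' subreq_at //; apply/orP; right.
      by apply: map_f; rewrite mem_filter jn Aj keepn.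
    apply: (leq_trans (count_sub _ Q _ _ us sub)).
    by case: (G2 y1 (sidx s1 y1 r n)) => _ _; apply.
  + have sub : {subset s' <= alive_before r' (sidx s1 y1 r n)}.
      move=> z /mapP[j]; rewrite mem_filter => /andP[Aj]; rewrite /alive_after inE.
      case/orP => [/eqP Ej | jn ->]; first by rewrite Ej An in Aj.
      exact: (key Hleg (leqnn n) jn Aj).
    apply: (leq_trans (count_sub _ Q _ _ us sub)).
    rewrite /alive_before; case: (sidx s1 y1 r n) => [|k0] //.
    by case: (G2 y1 k0) => _ _; apply.
Qed.
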